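(* (Stability condition for D-GLDPC codes.) Consider a D-GLDPC ensemble on the BEC with channel erasure probability $q\in[0,1]$, whose variable node decoder has EXIT function $$I_{E,V}(p,q)=\sum_{j\ge2}\lambda^{(\mathrm r)}_j(1-q\,p^{j-1})+\sum_i\lambda_iI^{(i)}_{E,V}(p,q),$$ where each $I^{(i)}_{E,V}$ is the variable-node EXIT function (for a fixed generator matrix $\mathbf{G}^{(i)}_V$) of an $(n_i,k_i)$ binary linear code $\mathcal{V}_i$ with $d_{\min}(\mathcal{V}_i)\ge2$, and whose check node decoder is as in the context, with all check component codes $\mathcal{C}_i$ of minimum distance at least $2$. Let $D_C$ be as in the context and assume $D_C>0$. Then $$-\frac{\partial I_{E,V}(p,q)}{\partial p}\Big|_{p=0}=q\lambda^{(\mathrm r)}_2+\sum_{i:\,d_{\min}(\mathcal{V}_i)=2}\ \sum_{z=0}^{k_i}q^z(1-q)^{k_i-z}\frac{2\lambda_i}{n_i}\Delta^{(i)}_{n_i-2,k_i-z},$$ so the stability condition $-\frac{\partial I_{E,V}}{\partial p}\big|_{p=0}\le D_C^{-1}$ reads $$q\lambda^{(\mathrm r)}_2+\sum_{i:\,d_{\min}(\mathcal{V}_i)=2}\sum_{z=0}^{k_i}q^z(1-q)^{k_i-z}\frac{2\lambda_i\Delta^{(i)}_{n_i-2,k_i-z}}{n_i}\le\Big[\rho'_{\mathrm{SPC}}(1)+\sum_{i:\,d_{\min}(\mathcal{C}_i)=2}\frac{2\rho_i}{n_i}\Delta^{(i)}_{n_i-2}\Big]^{-1}.$$ In particular, if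 every generalized variable component code $\mathcal{V}_i$ has $d_{\min}\ge3$ and $\lambda^{(\mathrm r)}_2>0$, the stability condition is equivalent to $q\le[\lambda^{(\mathrm r)}_2D_C]^{-1}$ (with equality in the stability condition iff $q=[\lambda^{(\mathrm r)}_2D_C]^{-1}$), and if moreover all generalized check component codes have $d_{\min}\ge3$, it is equivalent to $q\le[\lambda^{(\mathrm r)}_2\rho'_{\mathrm{SPC}}(1)]^{-1}$.
   Context: Edge fractions $\lambda^{(\mathrm r)}_j,\lambda_i\ge0$ sum to $1$; $\rho^{(\mathrm{SPC})}_j,\rho_i\ge0$ sum to $1$. Check node decoder EXIT function: $I_{E,C}(p)=\sum_{j\ge2}\rho^{(\mathrm{SPC})}_j(1-p)^{j-1}+\sum_i\rho_iI^{(i)}_{E,C}(p)$, where for an $(n,k)$ check code with generator matrix $\mathbf{G}$ (rank $k$), $I_{E}(p)=1-\frac1n\sum_{t=0}^{n-1}a_tp^t(1-p)^{n-t-1}$, $a_t=(n-t)\tilde e_{n-t}-(t+1)\tilde e_{n-t-1}$, $\tilde e_g=\sum_{|S|=g}\operatorname{rank}(\mathbf{G}_S)$ over $g$-element column sets. $\rho'_{\mathrm{SPC}}(1)=\sum_j(j-1)\rho^{(\mathrm{SPC})}_j$, $\Delta^{(i)}_{n_i-2}=\sum_{|S|=n_i-2}(k_i-\operatorname{rank}(\mathbf{G}^{(i)}_S))$ for a generator matrix of $\mathcal{C}_i$, and $D_C=\rho'_{\mathrm{SPC}}(1)+\sum_{i:\,d_{\min}(\mathcal{C}_i)=2}\frac{2\rho_i}{n_i}\Delta^{(i)}_{n_i-2}$.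 For an $(n,k)$ variable code with generator matrix $\mathbf{G}$ and $\mathbf{I}_k$ the identity: $\tilde e_{g,h}=\sum_{S,T}\operatorname{rank}[\mathbf{G}_S|(\mathbf{I}_k)_T]$ over $g$-element column sets $S$ of $\mathbf{G}$ and $h$-element column sets $T$ of $\mathbf{I}_k$; $a_{t,z}=(n-t)\tilde e_{n-t,k-z}-(t+1)\tilde e_{n-t-1,k-z}$; variable-node EXIT function $I_E(p,q)=1-\frac1n\sum_{t=0}^{n-1}\sum_{z=0}^ka_{t,z}p^t(1-p)^{n-t-1}q^z(1-q)^{k-z}$; and $\Delta_{n-2,k-z}=\sum_{S,T}(k-\operatorname{rank}[\mathbf{G}_S|(\mathbf{I}_k)_T])$ over $(n-2)$-element $S$ and $(k-z)$-element $T$. $\Delta^{(i)}_{n_i-2,k_i-z}$ is this quantity for $\mathbf{G}^{(i)}_V$. *)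

(* Defs.v *)
From HB Require Import structures.
From mathcomp Require Import all_boot all_order all_algebra.
Set Implicit Arguments. Unset Strict Implicit. Unset Printing Implicit Defensive.
Import Order.TTheory GRing.Theory Num.Theory.
Local Open Scope ring_scope.

Notation F2 := ('F_2 : fieldType).

(* G_S : the submatrix of G formed by the columns indexed by S (in increasing order). *)
Definition colS (k n : nat) (G : 'M[F2]_(k, n)) (S : {set 'I_n}) : 'M[F2]_(k, #|S|) :=
  colsub (fun j : 'I_#|S| => enum_val j) G.

Definition wt (n : nat) (c : 'rV[F2]_n) : nat := #|[set j | c 0 j != 0]|.

(* Minimum distance of the code spanned by the rows of G (the row space);
   by convention n.+1 (i.e. "infinity") for the zero code. *)
Definition dmin (k n : nat) (G : 'M[F2]_(k, n)) : nat :=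
  \big[minn/n.+1]_(c : 'rV[F2]_n | (c <= G)%MS && (c != 0)) wt c.

Definition etilde (k n : nat) (G : 'M[F2]_(k, n)) (g : nat) : nat :=
  \sum_(S : {set 'I_n} | #|S| == g) \rank (colS G S).

Definition DeltaC (k n : nat) (G : 'M[F2]_(k, n)) (g : nat) : nat :=
  \sum_(S : {set 'I_n} | #|S| == g) (k - \rank (colS G S))%N.

Definition rkST (k n : nat) (G : 'M[F2]_(k, n)) (S : {set 'I_n}) (T : {set 'I_k}) : nat :=
  \rank (row_mx (colS G S) (colS (1%:M : 'M[F2]_k) T)).

Definition etilde2 (k n : nat) (G : 'M[F2]_(k, n)) (g h : nat) : nat :=
  \sum_(S : {set 'I_n} | #|S| == g) \sum_(T : {set 'I_k} | #|T| == h) rkST G S T.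

Definition DeltaV (k n : nat) (G : 'M[F2]_(k, n)) (g h : nat) : nat :=
  \sum_(S : {set 'I_n} | #|S| == g) \sum_(T : {set 'I_k} | #|T| == h) (k - rkST G S T)%N.

Definition a_tz (R : nzRingType) (k n : nat) (G : 'M[F2]_(k, n)) (t z : nat) : R :=
  ((n - t)%N)%:R * (etilde2 G (n - t) (k - z))%:R
  - (t.+1)%:R * (etilde2 G (n - t - 1) (k - z))%:R.

Definition IEV_code (R : fieldType) (k n : nat) (G : 'M[F2]_(k, n)) (q : R) : {poly R} :=
  1 - (n%:R)^-1 *:
    \sum_(t < n) \sum_(z < k.+1)
       (a_tz R G t z * q ^+ z * (1 - q) ^+ (k - z)) *: ('X ^+ t * (1 - 'X) ^+ (n - t - 1)).

Definition IEV (R : fieldType) (Nr : nat) (lamr : nat -> R)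
  (mV : nat) (nV kV : 'I_mV -> nat) (GV : forall i, 'M[F2]_(kV i, nV i))
  (lamV : 'I_mV -> R) (q : R) : {poly R} :=
  \sum_(2 <= j < Nr) lamr j *: (1 - q *: 'X ^+ j.-1)
  + \sum_(i < mV) lamV i *: IEV_code (GV i) q.

Definition rhoSPCprime (R : nzRingType) (Ns : nat) (rhoS : nat -> R) : R :=
  \sum_(2 <= j < Ns) (j.-1)%:R * rhoS j.

Definition D_C (R : fieldType) (Ns : nat) (rhoS : nat -> R)
  (mC : nat) (nC kC : 'I_mC -> nat) (GC : forall i, 'M[F2]_(kC i, nC i))
  (rhoC : 'I_mC -> R) : R :=
  rhoSPCprime Ns rhoS
  + \sum_(i < mC | dmin (GC i) == 2%N)
      2%:R * rhoC i / (nC i)%:R * (DeltaC (GC i) (nC i - 2))%:R.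

(* Main.v *)
Require Import Defs.
From HB Require Import structures.
From mathcomp Require Import all_boot all_order all_algebra.
Import Order.TTheory GRing.Theory Num.Theory.
Set Implicit Arguments. Unset Strict Implicit. Unset Printing Implicit Defensive.
Local Open Scope ring_scope.

Lemma dmin_le (k n : nat) (G : 'M[F2]_(k, n)) (c : 'rV[F2]_n) :
  (c <= G)%MS -> c != 0 -> (dmin G <= wt c)%N.
Proof.
move=> cG c0; rewrite /dmin unlock /reducebig.
have : c \in index_enum _ := mem_index_enum c.
elim: (index_enum _) => //= a s IH; rewrite inE => /orP [/eqP <-|/IH h].
  by rewrite cG c0 /= geq_minl.
by case: ifP => _ //; rewrite geq_min h orbT.
Qed.

Lemma rank_colS_full (k n : nat) (G : 'M[F2]_(k, n)) (S : {set 'I_n}) :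
  \rank G = k -> (#|~: S| < dmin G)%N -> \rank (colS G S) = k.
Proof.
move=> rG hS; apply/eqP; rewrite eqn_leq rank_leq_row /=.
rewrite leqNgt; apply/negP => lt.
have : kermx (colS G S) != 0.
  by rewrite -mxrank_eq0 mxrank_ker subn_eq0 -ltnNge.
case/rowV0Pn => u /sub_kermxP uK u0.
set c := u *m G.
have c0 : c != 0.
  by rewrite /c mulmx_free_eq0 // /row_free rG.
have := dmin_le (submxMl u G) c0 : (dmin G <= wt c)%N.
have cS : forall j, j \in S -> c 0 j = 0.
  move=> j jS.
  have e : (u *m colS G S) 0 (enum_rank_in jS j) = 0 by rewrite uK mxE.
  rewrite mxE in e; rewrite /c mxE -[X in _ = X]e; apply: eq_bigr => i _.
  by rewrite /colS mxE enum_rankK_in.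
have : (wt c <= #|~: S|)%N.
  apply: subset_leq_card; apply/subsetP => j; rewrite !inE.
  by apply: contra => jS; rewrite cS.
move=> h1 h2; have := leq_trans h2 h1.
by rewrite leqNgt hS.
Qed.

Lemma rkST_full (k n : nat) (G : 'M[F2]_(k, n)) (S : {set 'I_n}) T :
  \rank G = k -> (#|~: S| < dmin G)%N -> rkST G S T = k.
Proof.
move=> rG hS; apply/eqP; rewrite eqn_leq rank_leq_row /=.
rewrite -{1}(rank_colS_full rG hS) /rkST.
set M := row_mx _ _.
have -> : colS G S = M *m col_mx 1%:M 0.
  by rewrite /M mul_row_col mulmx1 mulmx0 addr0.
exact: mxrankM_maxl.
Qed.

Lemma etilde2_Delta (k n : nat) (G : 'M[F2]_(k, n)) g h :
  (etilde2 G g h + DeltaV G g h =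
   #|[pred S : {set 'I_n} | #|S| == g]| * (#|[pred T : {set 'I_k} | #|T| == h]| * k))%N.
Proof.
rewrite /etilde2 /DeltaV -big_split /= -sum_nat_const; apply: eq_bigr => S _.
rewrite -big_split -sum_nat_const; apply: eq_bigr => T _ /=.
by rewrite subnKC // rank_leq_row.
Qed.

Lemma DeltaV0 (k n : nat) (G : 'M[F2]_(k, n)) g h :
  \rank G = k -> (n - g < dmin G)%N -> DeltaV G g h = 0%N.
Proof.
move=> rG hg; rewrite /DeltaV big1 // => S /eqP Sg; rewrite big1 // => T _.
have cS : #|~: S| = (n - g)%N.
  by have := cardsC S; rewrite card_ord Sg => /(congr1 (fun x => x - g)%N); rewrite addKn.
by rewrite rkST_full ?subnn // cS.
Qed.



Lemma coef_omX (R : fieldType) m :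
  ((1 - 'X : {poly R}) ^+ m)`_0 = 1 /\ ((1 - 'X : {poly R}) ^+ m)`_1 = - m%:R.
Proof.
elim: m => [|m [IH0 IH1]]; first by rewrite expr0 !coef1 /= oppr0.
rewrite exprS mulrBl mul1r !coefB !coefXM /= IH0 IH1 subr0; split => //.
by rewrite -opprD -natr1 addrC.
Qed.

Lemma coef1_term (R : fieldType) t m :
  ('X^t * (1 - 'X) ^+ m : {poly R})`_1 =
  if t == 0%N then - m%:R else if t == 1%N then 1 else 0.
Proof.
case: t => [|[|t]] /=.
- by rewrite expr0 mul1r (coef_omX R m).2.
- by rewrite expr1 coefXM /= (coef_omX R m).1.
- by rewrite coefXnM.
Qed.

Lemma sum_first2 (R : fieldType) n (F : nat -> R) :
  (forall t, (2 <= t)%N -> F t = 0) ->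
  \sum_(t < n) F t = (if (0 < n)%N then F 0%N else 0) + (if (1 < n)%N then F 1%N else 0).
Proof.
move=> F0; case: n => [|[|n]]; first by rewrite big_ord0 addr0.
  by rewrite big_ord1 addr0.
rewrite !big_ord_recl big1 ?addr0 ?addrA // => i _; exact: F0.
Qed.

Lemma etilde2_R (R : fieldType) k n (G : 'M[F2]_(k, n)) g h :
  (etilde2 G g h)%:R =
  ('C(n, g) * ('C(k, h) * k))%:R - (DeltaV G g h)%:R :> R.
Proof.
have := etilde2_Delta G g h.
have -> : #|[pred S : {set 'I_n} | #|S| == g]| = 'C(n, g).
  by rewrite -cardsE card_draws card_ord.
have -> : #|[pred T : {set 'I_k} | #|T| == h]| = 'C(k, h).
  by rewrite -cardsE card_draws card_ord.
by move=> <-; rewrite natrD addrK.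
Qed.

Lemma IEV_code_coef1 (R : fieldType) k n (G : 'M[F2]_(k, n)) (q : R) :
  \rank G = k -> (2 <= dmin G)%N ->
  (IEV_code G q)`_1 = - ((n%:R)^-1 * \sum_(z < k.+1)
     (2%:R * (DeltaV G (n - 2) (k - z))%:R * q ^+ z * (1 - q) ^+ (k - z))).
Proof.
move=> rG dG.
have D0 g h : (n - g < 2)%N -> DeltaV G g h = 0%N.
  by move=> hg; apply: DeltaV0 rG (leq_trans hg dG).
rewrite /IEV_code coefB coef1 /= sub0r coefZ coef_sum.
congr (- (_ * _)).
pose F (t : nat) := \sum_(z < k.+1) a_tz R G t z * q ^+ z * (1 - q) ^+ (k - z) *
  (if t == 0%N then - (n - t - 1)%:R else if t == 1%N then 1 else 0).
rewrite (eq_bigr (fun t : 'I_n => F t)) => [|t _]; last first.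
  by rewrite coef_sum; apply: eq_bigr => z _; rewrite coefZ coef1_term.
rewrite (@sum_first2 R n F) => [|t t2]; last first.
  by rewrite /F; apply: big1 => z _; case: t t2 => [|[|t]] // _; rewrite mulr0.
have sub1 : (n - (n - 1) < 2)%N by clear; case: n => // n; rewrite subSS subn0 subSnn.
have sub2 : (1 < n)%N = false -> (n - (n - 2) < 2)%N.
  by clear; case: n => [|[|n]].
have Fz : (0 < n)%N -> F 0%N = 0.
  move=> n0; rewrite /F big1 // => z _.
  rewrite /a_tz !subn0 !etilde2_R !D0 ?subnn // !subr0 (bin_sub n0) bin1 binn mul1n.
  by rewrite mul1r -natrM subrr !mul0r.
have ->: (if (0 < n)%N then F 0%N else 0) = 0 by case: ifP => // /Fz.
rewrite add0r.
case: ifP => [n1|n1]; last first.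
  by rewrite big1 // => z _; rewrite D0 ?sub2 // mulr0 !mul0r.
rewrite /F; apply: eq_bigr => z _; rewrite /= mulr1; congr (_ * _ * _).
rewrite /a_tz. have -> : (n - 1 - 1 = n - 2)%N by rewrite -subnDA.
rewrite !etilde2_R (D0 (n - 1)%N) // subr0 (bin_sub (ltnW n1)) (bin_sub n1) bin1.
set Y := ('C(k, k - z) * k)%N.
have E : (n - 1)%:R * (n * Y)%:R = 2 * ('C(n, 2) * Y)%:R :> R.
  by rewrite -!natrM mulnA; congr _%:R; rewrite mulnA (mul_bin_left n 1) bin1.
by rewrite mulrBr opprB E addrC subrK.
Qed.

Lemma rearr (R : comNzRingType) (x y t d a b : R) :
  x * (y * (t * d * a * b)) = a * b * (t * x * y) * d.
Proof.
rewrite -!mulrA [in LHS](mulrCA d a b) [in LHS](mulrC d b) [in LHS](mulrCA t a) [in LHS](mulrCA y a).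
rewrite [in LHS](mulrCA x a) [in LHS](mulrCA t b) [in LHS](mulrCA y b) [in LHS](mulrCA x b).
by rewrite [in LHS](mulrCA y t) [in LHS](mulrCA x t).
Qed.

Lemma nsub2 n : (n - (n - 2) < 3)%N.
Proof. by case: n => [|[|n]] //; rewrite subSS subSS subn0 -addn2 addKn. Qed.

Lemma deriv_IEV (R : fieldType) Nr (lamr : nat -> R) mV (nV kV : 'I_mV -> nat)
  (GV : forall i, 'M[F2]_(kV i, nV i)) (lamV : 'I_mV -> R) (q : R) :
  (forall j, ~~ (2 <= j < Nr)%N -> lamr j = 0) ->
  (forall i, \rank (GV i) = kV i) -> (forall i, (2 <= dmin (GV i))%N) ->
  - ((IEV Nr lamr GV lamV q)^`()).[0] = q * lamr 2%N
     + \sum_(i < mV | dmin (GV i) == 2%N) \sum_(z < (kV i).+1)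
          q ^+ z * (1 - q) ^+ (kV i - z) * (2%:R * lamV i / (nV i)%:R)
          * (DeltaV (GV i) (nV i - 2) (kV i - z))%:R.
Proof.
move=> lam0 rG dG.
rewrite horner_coef0 coef_deriv mulr1n /IEV coefD !coef_sum opprD.
congr (_ + _).
  under eq_bigr => j _ do rewrite coefZ coefB coef1 coefZ coefXn /= sub0r.
  case: (ltnP 2 Nr) => hN.
    rewrite big_ltn // big1_seq ?addr0 /=; first by rewrite mulrN mulr1 opprK mulrC.
    move=> j; rewrite mem_index_iota => /andP [j3 _].
    by case: j j3 => [|[|[|j]]] //= _; rewrite mulr0 oppr0 mulr0.
  rewrite big_geq // oppr0 lam0 ?mulr0 //.
  by rewrite /= -leqNgt.
rewrite -sumrN [RHS]big_mkcond /=; apply: eq_bigr => i _.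
rewrite coefZ IEV_code_coef1 // mulrN opprK.
case: ifP => [_|d2].
  rewrite !mulr_sumr; apply: eq_bigr => z _; exact: rearr.
rewrite big1 ?mulr0 // => z _.
rewrite DeltaV0 ?rG ?mulr0 ?mul0r //.
apply: leq_trans (nsub2 _) _.
by move: (dG i); rewrite leq_eqVlt eq_sym d2.
Qed.

Theorem mainTheorem8 (R : realFieldType)
  (Nr : nat) (lamr : nat -> R)
  (mV : nat) (nV kV : 'I_mV -> nat) (GV : forall i, 'M[F2]_(kV i, nV i)) (lamV : 'I_mV -> R)
  (Ns : nat) (rhoS : nat -> R)
  (mC : nat) (nC kC : 'I_mC -> nat) (GC : forall i, 'M[F2]_(kC i, nC i)) (rhoC : 'I_mC -> R)
  (q : R) :
  (* edge fractions *)
  (forall j, 0 <= lamr j) -> (forall j, ~~ (2 <= j < Nr)%N -> lamr j = 0) ->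
  (forall i, 0 <= lamV i) ->
  \sum_(2 <= j < Nr) lamr j + \sum_(i < mV) lamV i = 1 ->
  (forall j, 0 <= rhoS j) -> (forall j, ~~ (2 <= j < Ns)%N -> rhoS j = 0) ->
  (forall i, 0 <= rhoC i) ->
  \sum_(2 <= j < Ns) rhoS j + \sum_(i < mC) rhoC i = 1 ->
  (* component codes: generator matrices of full rank, d_min >= 2 *)
  (forall i, \rank (GV i) = kV i) -> (forall i, (2 <= dmin (GV i))%N) ->
  (forall i, \rank (GC i) = kC i) -> (forall i, (2 <= dmin (GC i))%N) ->
  0 <= q <= 1 ->
  0 < D_C Ns rhoS GC rhoC ->
  let DC := D_C Ns rhoS GC rhoC in
  let dIEV := - ((IEV Nr lamr GV lamV q)^`()).[0] in
  let RHS := q * lamr 2%N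
     + \sum_(i < mV | dmin (GV i) == 2%N) \sum_(z < (kV i).+1)
          q ^+ z * (1 - q) ^+ (kV i - z) * (2%:R * lamV i / (nV i)%:R)
          * (DeltaV (GV i) (nV i - 2) (kV i - z))%:R in
  [/\ dIEV = RHS,
      (dIEV <= DC^-1) <->
        (RHS <= (rhoSPCprime Ns rhoS
                 + \sum_(i < mC | dmin (GC i) == 2%N)
                     2%:R * rhoC i / (nC i)%:R * (DeltaC (GC i) (nC i - 2))%:R)^-1),
      (forall i, (3 <= dmin (GV i))%N) -> 0 < lamr 2%N ->
        ((dIEV <= DC^-1) <-> (q <= (lamr 2%N * DC)^-1)) /\
        ((dIEV = DC^-1) <-> (q = (lamr 2%N * DC)^-1))
    & (forall i, (3 <= dmin (GV i))%N) -> 0 < lamr 2%N ->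
      (forall i, (3 <= dmin (GC i))%N) ->
        ((dIEV <= DC^-1) <-> (q <= (lamr 2%N * rhoSPCprime Ns rhoS)^-1))].
Proof.
move=> _ lam0 _ _ _ _ _ _ rGV dGV _ dGC _ DCpos DC dIEV RHS.
have E : dIEV = RHS by rewrite /dIEV /RHS deriv_IEV.
have P3 : forall D : R, 0 < D -> dIEV = q * lamr 2%N -> 0 < lamr 2%N ->
    and ((dIEV <= D^-1) <-> (q <= (lamr 2%N * D)^-1))
        ((dIEV = D^-1) <-> (q = (lamr 2%N * D)^-1)).
  move=> D D0 ->; move=> l2.
  have l2n : lamr 2%N != 0 by rewrite gt_eqF.
  have iv : (lamr 2%N * D)^-1 = D^-1 / lamr 2%N by rewrite invfM mulrC.
  rewrite iv ler_pdivlMr //; split => //.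
  split => [h|h]; first by rewrite -h mulfK.
  by rewrite h divfK.
have ER : (forall i, (3 <= dmin (GV i))%N) -> RHS = q * lamr 2%N.
  move=> d3; rewrite /RHS big1 ?addr0 // => i /eqP d2.
  by move: (d3 i); rewrite d2.
split.
- exact: E.
- by rewrite E.
- by move=> d3 l2; apply: P3 => //; rewrite E ER.
move=> d3 l2 c3.
have EC : DC = rhoSPCprime Ns rhoS.
  rewrite /DC /D_C big1 ?addr0 // => i /eqP d2.
  by move: (c3 i); rewrite d2.
have [h _] := P3 DC DCpos (etrans E (ER d3)) l2.
by rewrite -EC.
Qed.
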